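(* For the generalized one-way trading problem (GOT) with capacity $C$ and bounds $0<L\le U$, $\theta=U/L$, under Assumption A, the optimal competitive ratio (the smallest competitive ratio achievable by an online algorithm) is $1+\ln\theta$.
   Context: GOT: a single knapsack of capacity $C$; items $n=1,\dots,N$ arrive one at a time. Item $n$ has a size $D_n>0$ and a value function $g_n:[0,D_n]\to\mathbb{R}_{\ge0}$, revealed on arrival. The offline problem is $\max\sum_n g_n(y_n)$ subject to $\sum_n y_n\le C$, $0\le y_n\le D_n$. Assumption A: each $g_n$ is non-decreasing, differentiable and concave, $g_n(0)=0$, and $L\le g_n'\le U$, with $L,U,C$ known in advance. An online algorithm irrevocably chooses $y_n$ upon arrival of item $n$ using only items $1,\dots,n$ and $C,L,U$, keeping the constraints feasible. Its competitive ratio is $\sup_{\mathcal I}\mathrm{OPT}(\mathcal I)/\mathrm{ALG}(\mathcal I)$ over all instances satisfying Assumption A. *)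

(* Defs.v *)
From Stdlib Require Import Reals List.
Open Scope R_scope.

(** An item: its size D_n and its value function g_n (only its values on
    [0, D_n] are meaningful). *)
Definition item : Type := (R * (R -> R))%type.

Definition dflt_item : item := (1, fun _ => 0).

Fixpoint rsum (f : nat -> R) (n : nat) : R :=
  match n with
  | O => 0
  | S k => rsum f k + f k
  end.

(** Assumption A for one item (D, g): D > 0; g : [0,D] -> R_{>=0} with
    g(0) = 0, non-decreasing, concave, differentiable on [0,D] (one-sided at
    the endpoints, i.e. derivative taken within [0,D]) with L <= g' <= U. *)
Definition assumptionA_item (L U : R) (D : R) (g : R -> R) : Prop :=
  0 < D /\
  g 0 = 0 /\
  (forall x, 0 <= x <= D -> 0 <= g x) /\
  (forall x y, 0 <= x <= D -> 0 <= y <= D -> x <= y -> g x <= g y) /\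
  (forall x y t, 0 <= x <= D -> 0 <= y <= D -> 0 <= t <= 1 ->
      t * g x + (1 - t) * g y <= g (t * x + (1 - t) * y)) /\
  exists g' : R -> R,
    (forall x, 0 <= x <= D ->
       limit1_in (fun z => (g z - g x) / (z - x))
                 (fun z => 0 <= z <= D /\ z <> x) (g' x) x) /\
    (forall x, 0 <= x <= D -> L <= g' x <= U).

Definition valid_instance (L U : R) (I : list item) : Prop :=
  Forall (fun it => assumptionA_item L U (fst it) (snd it)) I.

Definition size_of (I : list item) (n : nat) : R := fst (nth n I dflt_item).
Definition val_of (I : list item) (n : nat) : R -> R := snd (nth n I dflt_item).

Definition offline_feasible (C : R) (I : list item) (y : nat -> R) : Prop :=
  (forall n, (n < length I)%nat -> 0 <= y n <= size_of I n) /\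
  rsum y (length I) <= C.

Definition value (I : list item) (y : nat -> R) : R :=
  rsum (fun n => val_of I n (y n)) (length I).

(** A deterministic online algorithm (for fixed, known C, L, U) maps the
    sequence of items revealed so far (items 1..n, the last being the current
    one) to the irrevocable decision y_n. *)
Definition online_alg : Type := list item -> R.

Definition decision (alg : online_alg) (I : list item) (n : nat) : R :=
  alg (firstn (S n) I).

Definition online_feasible (C L U : R) (alg : online_alg) : Prop :=
  forall I, valid_instance L U I -> offline_feasible C I (decision alg I).

Definition ALG (alg : online_alg) (I : list item) : R := value I (decision alg I).

(** alg is c-competitive: OPT(I) <= c * ALG(I) for every instance, where
    OPT(I) is the supremum of value I y over offline-feasible y. *)
Definition competitive (C L U : R) (alg : online_alg) (c : R) : Prop :=
  forall I, valid_instance L U I ->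
    forall y, offline_feasible C I y -> value I y <= c * ALG alg I.

(* Main.v *)
Require Import Defs.
From Stdlib Require Import Reals List Lra Lia ClassicalEpsilon Classical.
Open Scope R_scope.

Lemma chord (D : R) (g : R -> R) :
  (forall x y t, 0 <= x <= D -> 0 <= y <= D -> 0 <= t <= 1 ->
      t * g x + (1 - t) * g y <= g (t * x + (1 - t) * y)) ->
  forall x t z, 0 <= x -> x <= t -> t <= z -> z <= D -> x < z ->
  (t - x) * (g z - g x) <= (g t - g x) * (z - x).
Proof.
  intros Hc x t z H1 H2 H3 H4 H5.
  set (l := (t - x) / (z - x)).
  assert (Hl0 : 0 <= l) by (unfold l; apply Rmult_le_pos; [lra| left; apply Rinv_0_lt_compat; lra]).
  assert (Hlz : l * (z - x) = t - x) by (unfold l; field; lra).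
  assert (Hl1 : l <= 1).
  { destruct (Rle_or_lt l 1) as [h|h]; auto. nra. }
  pose proof (Hc z x l ltac:(lra) ltac:(lra) ltac:(lra)) as Hc'.
  replace (l * z + (1 - l) * x) with t in Hc' by lra.
  nra.
Qed.

Lemma lip_g (L U D : R) (g : R -> R) :
  assumptionA_item L U D g ->
  forall x z, 0 <= x -> x <= z -> z <= D ->
  L * (z - x) <= g z - g x <= U * (z - x).
Proof.
  intros [HD [Hg0 [Hpos [Hmono [Hconc [g' [Hlim Hb]]]]]]] x z H1 H2 H3.
  destruct (Req_dec x z) as [E|Hxz]. { subst. lra. }
  assert (Hxz' : x < z) by lra.
  pose proof (chord D g Hconc) as Ch.
  split.
  - destruct (Rle_or_lt (L * (z - x)) (g z - g x)) as [h|h]; auto.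
    exfalso.
    set (s := (g z - g x) / (z - x)).
    assert (Hs : s * (z - x) = g z - g x) by (unfold s; field; lra).
    assert (HsL : s < L) by nra.
    destruct (Hlim z ltac:(lra) (L - s) ltac:(lra)) as [alp [Halp H]].
    set (t := z - Rmin (alp / 2) (z - x)).
    assert (Hm1 : Rmin (alp/2) (z - x) <= alp/2) by apply Rmin_l.
    assert (Hm2 : Rmin (alp/2) (z - x) <= z - x) by apply Rmin_r.
    assert (Hm3 : 0 < Rmin (alp/2) (z - x)) by (apply Rmin_glb_lt; lra).
    specialize (H t). simpl in H. unfold R_dist in H.
    assert (Ht : Rabs ((g t - g z) / (t - z) - g' z) < L - s).
    { apply H. split. split. unfold t; lra. unfold t; lra.
      unfold t. rewrite Rabs_left by lra. lra. }
    set (q := (g t - g z) / (t - z)) in Ht.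
    assert (Hq : q * (z - t) = g z - g t) by (unfold q; field; unfold t; lra).
    pose proof (Ch x t z H1 ltac:(unfold t; lra) ltac:(unfold t; lra) H3 Hxz') as C1.
    assert (Hq2 : q * (z - x) <= s * (z - x)).
    { assert ((z - t) * (q * (z - x)) <= (z - t) * (s * (z - x))) by nra.
      apply Rmult_le_reg_l with (z - t). unfold t; lra. lra. }
    assert (q <= s) by (apply Rmult_le_reg_r with (z - x); lra).
    destruct (Hb z ltac:(lra)).
    apply Rabs_def2 in Ht. lra.
  - destruct (Rle_or_lt (g z - g x) (U * (z - x))) as [h|h]; auto.
    exfalso.
    set (s := (g z - g x) / (z - x)).
    assert (Hs : s * (z - x) = g z - g x) by (unfold s; field; lra).
    assert (HsU : U < s) by nra.
    destruct (Hlim x ltac:(lra) (s - U) ltac:(lra)) as [alp [Halp H]].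
    set (t := x + Rmin (alp / 2) (z - x)).
    assert (Hm1 : Rmin (alp/2) (z - x) <= alp/2) by apply Rmin_l.
    assert (Hm2 : Rmin (alp/2) (z - x) <= z - x) by apply Rmin_r.
    assert (Hm3 : 0 < Rmin (alp/2) (z - x)) by (apply Rmin_glb_lt; lra).
    specialize (H t). simpl in H. unfold R_dist in H.
    assert (Ht : Rabs ((g t - g x) / (t - x) - g' x) < s - U).
    { apply H. split. split. unfold t; lra. unfold t; lra.
      unfold t. rewrite Rabs_right by lra. lra. }
    set (q := (g t - g x) / (t - x)) in Ht.
    assert (Hq : q * (t - x) = g t - g x) by (unfold q; field; unfold t; lra).
    pose proof (Ch x t z H1 ltac:(unfold t; lra) ltac:(unfold t; lra) H3 Hxz') as C1.
    assert (Hq2 : s * (z - x) <= q * (z - x)).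
    { assert ((t - x) * (s * (z - x)) <= (t - x) * (q * (z - x))) by nra.
      apply Rmult_le_reg_l with (t - x). unfold t; lra. lra. }
    assert (s <= q) by (apply Rmult_le_reg_r with (z - x); lra).
    destruct (Hb x ltac:(lra)).
    apply Rabs_def2 in Ht. lra.
Qed.

Lemma exp_chord u v : u <= v ->
  (v - u) * exp u <= exp v - exp u <= (v - u) * exp v.
Proof.
  intros H.
  pose proof (exp_ineq1_le (v - u)) as H1.
  pose proof (exp_ineq1_le (u - v)) as H2.
  assert (E1 : exp v = exp u * exp (v - u)) by (rewrite <- exp_plus; f_equal; ring).
  assert (E2 : exp u = exp v * exp (u - v)) by (rewrite <- exp_plus; f_equal; ring).
  pose proof (exp_pos u). pose proof (exp_pos v).
  split; nra.
Qed.

Lemma exp_le u v : u <= v -> exp u <= exp v.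
Proof. intros H. pose proof (exp_chord u v H). pose proof (exp_pos u). nra. Qed.

Lemma exp_ge1 u : 0 <= u -> 1 <= exp u.
Proof. intros. rewrite <- exp_0. apply exp_le; lra. Qed.

Definition psi (L K w : R) : R :=
  if Rle_dec w K then L else L * exp (w / K - 1).
Definition Psi (L K w : R) : R :=
  if Rle_dec w K then L * w else L * K * exp (w / K - 1).

Lemma divK_ge K w : 0 < K -> K <= w -> 0 <= w / K - 1.
Proof.
  intros HK H. replace (w / K - 1) with ((w - K) * / K) by (field; lra).
  apply Rmult_le_pos; [lra| left; apply Rinv_0_lt_compat; lra].
Qed.

Lemma div_le_mono s t K : 0 < K -> s <= t -> s / K <= t / K.
Proof. intros. unfold Rdiv. apply Rmult_le_compat_r; [left; apply Rinv_0_lt_compat|]; lra. Qed.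

Lemma psi_exp L K w : 0 < K -> K <= w -> psi L K w = L * exp (w / K - 1).
Proof.
  intros HK H. unfold psi. destruct (Rle_dec w K); auto.
  assert (w = K) by lra. subst. replace (K/K - 1) with 0 by (field; lra).
  rewrite exp_0; ring.
Qed.

Lemma Psi_exp L K w : 0 < K -> K <= w -> Psi L K w = L * K * exp (w / K - 1).
Proof.
  intros HK H. unfold Psi. destruct (Rle_dec w K); auto.
  assert (w = K) by lra. subst. replace (K/K - 1) with 0 by (field; lra).
  rewrite exp_0; ring.
Qed.

Lemma psi_lin L K w : w <= K -> psi L K w = L.
Proof. intros. unfold psi. destruct (Rle_dec w K); lra. Qed.
Lemma Psi_lin L K w : w <= K -> Psi L K w = L * w.
Proof. intros. unfold Psi. destruct (Rle_dec w K); lra. Qed.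

Lemma psi_ge L K w : 0 < L -> 0 < K -> L <= psi L K w.
Proof.
  intros HL HK. destruct (Rle_dec w K). rewrite psi_lin; lra.
  rewrite psi_exp by lra. pose proof (exp_ge1 _ (divK_ge K w HK ltac:(lra))). nra.
Qed.

Lemma psi_mono L K s t : 0 < L -> 0 < K -> s <= t -> psi L K s <= psi L K t.
Proof.
  intros HL HK H.
  destruct (Rle_dec s K).
  - rewrite (psi_lin L K s) by lra. apply psi_ge; lra.
  - rewrite !psi_exp by lra. apply Rmult_le_compat_l; [lra|]. apply exp_le.
    pose proof (div_le_mono s t K HK H). lra.
Qed.

Lemma Psi_0 L K : 0 < K -> Psi L K 0 = 0.
Proof. intros. rewrite Psi_lin by lra. ring. Qed.

Lemma Psi_chord_exp L K s t : 0 < L -> 0 < K -> K <= s -> s <= t ->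
  (t - s) * psi L K s <= Psi L K t - Psi L K s <= (t - s) * psi L K t.
Proof.
  intros HL HK Hs Hst.
  rewrite !psi_exp, !Psi_exp by lra.
  pose proof (exp_chord (s/K - 1) (t/K - 1) ltac:(pose proof (div_le_mono s t K HK Hst); lra)) as [A B].
  replace (t / K - 1 - (s / K - 1)) with ((t - s) / K) in A, B by (field; lra).
  set (es := exp (s/K - 1)) in *. set (et := exp (t/K-1)) in *.
  assert (E : (t - s) / K * K = t - s) by (field; lra).
  split.
  - replace (L * K * et - L * K * es) with (L * K * (et - es)) by ring.
    apply Rle_trans with (L * K * ((t - s) / K * es)).
    + right. replace ((t - s) * (L * es)) with (L * ((t-s)/K * K) * es) by (rewrite E; ring). ring.
    + apply Rmult_le_compat_l; [nra|]. lra.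
  - replace (L * K * et - L * K * es) with (L * K * (et - es)) by ring.
    apply Rle_trans with (L * K * ((t - s) / K * et)).
    + apply Rmult_le_compat_l; [nra|]. lra.
    + right. replace ((t - s) * (L * et)) with (L * ((t-s)/K * K) * et) by (rewrite E; ring). ring.
Qed.

Lemma Psi_chord L K s t : 0 < L -> 0 < K -> s <= t ->
  (t - s) * psi L K s <= Psi L K t - Psi L K s <= (t - s) * psi L K t.
Proof.
  intros HL HK Hst.
  destruct (Rle_dec t K).
  - rewrite !psi_lin, !Psi_lin by lra. split; right; ring.
  - destruct (Rle_dec s K).
    + pose proof (Psi_chord_exp L K K t HL HK ltac:(lra) ltac:(lra)) as [A B].
      rewrite (psi_lin L K K) in A by lra. rewrite (Psi_lin L K K) in A, B by lra.
      rewrite (psi_lin L K s), (Psi_lin L K s) by lra.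
      pose proof (psi_ge L K t HL HK).
      split; nra.
    + apply Psi_chord_exp; lra.
Qed.

Lemma psi_cont L K W tau : 0 < L -> 0 < K -> 0 < tau -> tau <= K / 2 ->
  psi L K (W + tau) <= psi L K W + 2 * (tau / K) * psi L K W.
Proof.
  intros HL HK Ht1 Ht2.
  assert (Hk : tau / K <= 1/2).
  { replace (1/2) with ((K/2)/K) by (field; lra). apply div_le_mono; lra. }
  assert (Hk0 : 0 < tau / K) by (apply Rdiv_lt_0_compat; lra).
  destruct (Rle_dec (W + tau) K).
  - rewrite !psi_lin by lra. nra.
  - rewrite (psi_exp L K (W + tau)) by lra.
    destruct (Rle_dec W K).
    + rewrite psi_lin by lra.
      set (u := (W + tau) / K - 1).
      assert (Hu0 : 0 <= u) by (apply divK_ge; lra).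
      assert (Hu1 : u <= tau / K).
      { unfold u. replace ((W + tau) / K - 1) with ((W - K)/K + tau / K) by (field; lra).
        assert ((W - K) / K <= 0). { replace ((W-K)/K) with ((W-K) * /K) by (field; lra).
          assert (0 < / K) by (apply Rinv_0_lt_compat; lra). nra. }
        lra. }
      pose proof (exp_chord 0 u Hu0) as [_ B]. rewrite exp_0 in B.
      assert (exp u * (1 - u) <= 1) by nra.
      assert (exp u <= 2) by nra.
      assert (u * exp u <= (tau / K) * 2) by (apply Rmult_le_compat; pose proof (exp_pos u); lra).
      assert (exp u <= 1 + 2 * (tau / K)) by lra.
      assert (L * exp u <= L * (1 + 2 * (tau / K))) by (apply Rmult_le_compat_l; lra).
      lra.
    + rewrite psi_exp by lra.
      set (u := W / K - 1). set (v := (W + tau) / K - 1).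
      assert (Hv : v - u = tau / K) by (unfold u, v; field; lra).
      pose proof (exp_chord u v ltac:(lra)) as [_ B].
      pose proof (exp_pos u). pose proof (exp_pos v).
      rewrite Hv in B.
      assert (exp v <= 2 * exp u) by nra.
      assert (tau / K * exp v <= tau / K * (2 * exp u)) by (apply Rmult_le_compat_l; lra).
      assert (exp v <= exp u + 2 * (tau / K) * exp u) by lra.
      assert (L * exp v <= L * (exp u + 2 * (tau / K) * exp u)) by (apply Rmult_le_compat_l; lra).
      lra.
Qed.

Definition capf (C w D : R) : R := Rmin D (C - w).
Definition hval (L K w : R) (g : R -> R) (z : R) : R := g z - Psi L K (w + z).
Definition spec (C L K w : R) (it : item) (y : R) : Prop :=
  0 <= y <= capf C w (fst it) /\
  (forall z, 0 <= z <= capf C w (fst it) -> hval L K w (snd it) z <= hval L K w (snd it) y) /\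
  (forall z, y < z <= capf C w (fst it) -> hval L K w (snd it) z < hval L K w (snd it) y).

Lemma clamp_lip a b x y : a <= b ->
  Rabs (Rmax a (Rmin b x) - Rmax a (Rmin b y)) <= Rabs (x - y).
Proof.
  intros H. unfold Rmax, Rmin.
  repeat (destruct (Rle_dec _ _)); unfold Rabs; repeat (destruct (Rcase_abs _)); lra.
Qed.

Lemma clamp_id a b x : a <= x <= b -> Rmax a (Rmin b x) = x.
Proof. intros H. unfold Rmax, Rmin. repeat (destruct (Rle_dec _ _)); lra. Qed.

Lemma clamp_in a b x : a <= b -> a <= Rmax a (Rmin b x) <= b.
Proof. intros H. unfold Rmax, Rmin. repeat (destruct (Rle_dec _ _)); lra. Qed.

Lemma hval_lip C L U K w D g : 0 < L -> 0 < K -> psi L K C <= U ->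
  assumptionA_item L U D g -> 0 <= w ->
  forall a b, 0 <= a -> a <= b -> b <= capf C w D ->
  Rabs (hval L K w g b - hval L K w g a) <= U * (b - a).
Proof.
  intros HL HK HU HA Hw a b Ha Hab Hb.
  assert (HbD : b <= D) by (eapply Rle_trans; [apply Hb| apply Rmin_l]).
  assert (HbC : b <= C - w) by (eapply Rle_trans; [apply Hb| apply Rmin_r]).
  pose proof (lip_g L U D g HA a b Ha Hab HbD) as [G1 G2].
  pose proof (Psi_chord L K (w + a) (w + b) HL HK ltac:(lra)) as [P1 P2].
  pose proof (psi_ge L K (w + a) HL HK).
  pose proof (psi_mono L K (w + b) C HL HK ltac:(lra)).
  unfold hval.
  assert ((w + b - (w + a)) * psi L K (w + b) <= (b - a) * U)
    by (replace (w + b - (w + a)) with (b - a) by ring; apply Rmult_le_compat_l; lra).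
  assert (0 <= (w + b - (w + a)) * psi L K (w + a))
    by (apply Rmult_le_pos; lra).
  apply Rabs_le. split; nra.
Qed.

Lemma spec_exists C L U K w it : 0 < L -> 0 < K -> L <= U -> psi L K C <= U ->
  assumptionA_item L U (fst it) (snd it) -> 0 <= w <= C ->
  exists y, spec C L K w it y.
Proof.
  intros HL HK HLU HU HA Hw.
  destruct it as [D g]; simpl in *.
  assert (HD : 0 < D) by (destruct HA; auto).
  set (cap := capf C w D).
  assert (Hcap : 0 <= cap) by (unfold cap, capf, Rmin; destruct (Rle_dec _ _); lra).
  set (h := hval L K w g).
  assert (Hlip : forall a b, 0 <= a <= cap -> 0 <= b <= cap -> Rabs (h b - h a) <= U * Rabs (b - a)).
  { intros a b Ha Hb. destruct (Rle_dec a b).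
    - rewrite (Rabs_right (b - a)) by lra. apply (hval_lip C L U K w D g); try assumption; fold cap; lra.
    - rewrite Rabs_minus_sym. rewrite (Rabs_left (b - a)) by lra.
      replace (- (b - a)) with (a - b) by ring.
      apply (hval_lip C L U K w D g); try assumption; fold cap; lra. }
  set (cl := fun y => Rmax 0 (Rmin cap y)).
  set (hx := fun y => h (cl y)).
  assert (Hcont : forall c, 0 <= c <= cap -> continuity_pt hx c).
  { intros c Hc. unfold continuity_pt, continue_in, limit1_in, limit_in.
    intros eps Heps. exists (eps / U). split. apply Rdiv_lt_0_compat; lra.
    intros x [_ Hx]. simpl in *. unfold R_dist in *.
    unfold hx.
    pose proof (Hlip (cl c) (cl x) (clamp_in 0 cap c Hcap) (clamp_in 0 cap x Hcap)) as H1.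
    pose proof (clamp_lip 0 cap x c Hcap) as H2. fold (cl x) (cl c) in H2.
    assert (U * Rabs (cl x - cl c) <= U * Rabs (x - c)) by (apply Rmult_le_compat_l; lra).
    assert (U * Rabs (x - c) < U * (eps / U)) by (apply Rmult_lt_compat_l; lra).
    replace (U * (eps / U)) with eps in * by (field; lra).
    lra. }
  destruct (continuity_ab_maj hx 0 cap Hcap Hcont) as [Mx [HM HMx]].
  assert (HM' : forall c, 0 <= c <= cap -> h c <= h Mx).
  { intros c Hc. specialize (HM c Hc). unfold hx, cl in HM.
    rewrite !clamp_id in HM by lra. exact HM. }
  set (S := fun z => 0 <= z <= cap /\ h Mx <= h z).
  assert (HSb : bound S). { exists cap. intros z [Hz _]. lra. }
  destruct (completeness S HSb (ex_intro _ Mx (conj HMx (Rle_refl _)))) as [m [Hub Hlub]].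
  assert (Hm1 : Mx <= m) by (apply Hub; split; [lra|apply Rle_refl]).
  assert (Hm2 : m <= cap) by (apply Hlub; intros z [Hz _]; lra).
  assert (Hhm : h Mx <= h m).
  { destruct (Rle_or_lt (h Mx) (h m)) as [E|E]; auto. exfalso.
    set (d := (h Mx - h m) / (2 * U)).
    assert (Hd : 0 < d) by (apply Rdiv_lt_0_compat; lra).
    destruct (classic (exists s, S s /\ m - d < s)) as [[s [Ss Hs]]|NE].
    - assert (s <= m) by (apply Hub; auto).
      destruct Ss as [Ss1 Ss2].
      pose proof (Hlip s m Ss1 ltac:(lra)) as Hl.
      rewrite (Rabs_right (m - s)) in Hl by lra.
      assert (U * (m - s) < U * d) by (apply Rmult_lt_compat_l; lra).
      assert (U * d = (h Mx - h m) / 2) by (unfold d; field; lra).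
      revert Hl; unfold Rabs; destruct (Rcase_abs _); intros; lra.
    - assert (m <= m - d); [|lra].
      apply Hlub. intros s Ss. destruct (Rle_or_lt s (m - d)) as [E1|E1]; auto.
      exfalso. apply NE. exists s; auto. }
  exists m. unfold spec; simpl. fold cap. fold h.
  split; [lra|]. split.
  - intros z Hz. specialize (HM' z Hz). lra.
  - intros z [Hz1 Hz2]. destruct (Rle_or_lt (h m) (h z)) as [E|E]; auto.
    exfalso. assert (z <= m); [|lra]. apply Hub. split; [lra|]. lra.
Qed.

Lemma cap_le C w D : capf C w D <= D /\ capf C w D <= C - w.
Proof. unfold capf. split; [apply Rmin_l | apply Rmin_r]. Qed.

Lemma cap_cases C w D : capf C w D = D \/ capf C w D = C - w.
Proof. unfold capf, Rmin. destruct (Rle_dec _ _); auto. Qed.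

Lemma item_bound C L U K w D g y W tau ys :
  0 < L -> 0 < K -> psi L K C = U ->
  assumptionA_item L U D g -> spec C L K w (D, g) y ->
  0 <= w -> w + y <= W -> W <= C -> 0 < tau -> 0 <= ys <= D ->
  g ys <= g y - (Psi L K (w + y) - Psi L K w) + psi L K (W + tau) * ys.
Proof.
  intros HL HK HU HA [Hy [Hmax Hstr]] Hw HW HWC Ht Hys. simpl in *.
  unfold hval in *.
  pose proof (cap_le C w D) as [Hc1 Hc2].
  destruct (Rle_or_lt ys y) as [E|E].
  - specialize (Hmax ys ltac:(lra)).
    pose proof (Psi_chord L K w (w + ys) HL HK ltac:(lra)) as [_ P].
    pose proof (psi_mono L K (w + ys) (W + tau) HL HK ltac:(lra)).
    assert ((w + ys - w) * psi L K (w + ys) <= ys * psi L K (W + tau)).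
    { replace (w + ys - w) with ys by ring. apply Rmult_le_compat_l; lra. }
    lra.
  - pose proof (Psi_chord L K w (w + y) HL HK ltac:(lra)) as [_ P].
    pose proof (psi_mono L K (w + y) (W + tau) HL HK ltac:(lra)).
    assert (Q : (w + y - w) * psi L K (w + y) <= y * psi L K (W + tau)).
    { replace (w + y - w) with y by ring. apply Rmult_le_compat_l; lra. }
    assert (G : g ys - g y <= psi L K (W + tau) * (ys - y)); [|nra].
    destruct (Rle_or_lt (capf C w D) y) as [Ec|Ec].
    +
      assert (Hcw : capf C w D = C - w).
      { destruct (cap_cases C w D) as [h|h]; auto. lra. }
      pose proof (lip_g L U D g HA y ys ltac:(lra) ltac:(lra) ltac:(lra)) as [_ G].
      pose proof (psi_mono L K C (W + tau) HL HK ltac:(lra)).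
      nra.
    + set (t := Rmin tau (Rmin (ys - y) (capf C w D - y))).
      assert (T1 : t <= tau) by apply Rmin_l.
      assert (T2 : t <= ys - y) by (eapply Rle_trans; [apply Rmin_r| apply Rmin_l]).
      assert (T3 : t <= capf C w D - y) by (eapply Rle_trans; [apply Rmin_r| apply Rmin_r]).
      assert (T4 : 0 < t) by (apply Rmin_glb_lt; [lra| apply Rmin_glb_lt; lra]).
      specialize (Hmax (y + t) ltac:(lra)).
      pose proof (Psi_chord L K (w + y) (w + (y + t)) HL HK ltac:(lra)) as [_ P2].
      pose proof (psi_mono L K (w + (y + t)) (W + tau) HL HK ltac:(lra)).
      assert (Q2 : (w + (y + t) - (w + y)) * psi L K (w + (y + t)) <= t * psi L K (W + tau)).
      { replace (w + (y + t) - (w + y)) with t by ring. apply Rmult_le_compat_l; lra. }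
      assert (Hd : g (y + t) - g y <= t * psi L K (W + tau)) by lra.
      pose proof (chord D g ltac:(destruct HA as [_ [_ [_ [_ [hc _]]]]]; exact hc)
                    y (y + t) ys ltac:(lra) ltac:(lra) ltac:(lra) ltac:(lra) ltac:(lra)) as Ch.
      replace (y + t - y) with t in Ch by ring.
      assert (t * (g ys - g y) <= t * (psi L K (W + tau) * (ys - y))) by nra.
      apply Rmult_le_reg_l with t; lra.
Qed.

Lemma item_alg C L K w D g y : 0 < L -> 0 < K -> g 0 = 0 -> spec C L K w (D, g) y ->
  Psi L K (w + y) - Psi L K w <= g y.
Proof.
  intros HL HK Hg0 [Hy [Hmax _]]. simpl in *. unfold hval in *.
  specialize (Hmax 0 ltac:(lra)). rewrite Hg0, Rplus_0_r in Hmax. lra.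
Qed.

Lemma item_full C L U K w D g y W :
  0 < L -> 0 < K -> K <= C ->
  assumptionA_item L U D g -> spec C L K w (D, g) y ->
  0 <= w -> w + y <= W -> W < K -> y = D.
Proof.
  intros HL HK HKC HA [Hy [Hmax Hstr]] Hw HW HWK. simpl in *. unfold hval in *.
  pose proof (cap_le C w D) as [Hc1 Hc2].
  assert (Hyc : y = capf C w D).
  { destruct (Rle_or_lt (capf C w D) y) as [E|E]; [lra|]. exfalso.
    set (t := Rmin (capf C w D - y) (K - (w + y))).
    assert (T1 : t <= capf C w D - y) by apply Rmin_l.
    assert (T2 : t <= K - (w + y)) by apply Rmin_r.
    assert (T4 : 0 < t) by (apply Rmin_glb_lt; lra).
    specialize (Hstr (y + t) ltac:(lra)).
    pose proof (lip_g L U D g HA y (y + t) ltac:(lra) ltac:(lra) ltac:(lra)) as [G _].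
    rewrite !Psi_lin in Hstr by lra. nra. }
  destruct (cap_cases C w D) as [h|h]; lra.
Qed.

Definition choose (C L K w : R) (it : item) : R := epsilon (inhabits 0) (spec C L K w it).
Definition usage (C L K : R) (l : list item) : R :=
  fold_left (fun w it => w + choose C L K w it) l 0.
Definition the_alg (C L K : R) : online_alg :=
  fun l => choose C L K (usage C L K (removelast l)) (last l dflt_item).

Lemma firstn_S_app (I : list item) n : (n < length I)%nat ->
  firstn (S n) I = firstn n I ++ nth n I dflt_item :: nil.
Proof.
  revert n. induction I as [|a I IH]; intros n Hn; simpl in Hn; [lia|].
  destruct n as [|n]; simpl; auto.
  f_equal. apply IH. lia.
Qed.

Lemma decision_eq C L K I n : (n < length I)%nat ->
  decision (the_alg C L K) I n = choose C L K (usage C L K (firstn n I)) (nth n I dflt_item).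
Proof.
  intros Hn. unfold decision, the_alg. rewrite firstn_S_app by auto.
  rewrite removelast_last, last_last. reflexivity.
Qed.

Lemma usage_S C L K I n : (n < length I)%nat ->
  usage C L K (firstn (S n) I) = usage C L K (firstn n I) + decision (the_alg C L K) I n.
Proof.
  intros Hn. rewrite decision_eq by auto. unfold usage at 1.
  rewrite firstn_S_app by auto. rewrite fold_left_app. reflexivity.
Qed.

Lemma rsum_le f h n : (forall k, (k < n)%nat -> f k <= h k) -> rsum f n <= rsum h n.
Proof.
  induction n; intros H; simpl; [lra|].
  pose proof (H n ltac:(lia)). pose proof (IHn ltac:(intros; apply H; lia)). lra.
Qed.

Lemma rsum_ext f h n : (forall k, (k < n)%nat -> f k = h k) -> rsum f n = rsum h n.
Proof.
  induction n; intros H; simpl; [lra|].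
  rewrite (H n ltac:(lia)), IHn by (intros; apply H; lia). lra.
Qed.

Lemma rsum_lin a b d c n :
  rsum (fun k => a k - b k + c * d k) n = rsum a n - rsum b n + c * rsum d n.
Proof. induction n; simpl; [ring|]. rewrite IHn. ring. Qed.

Lemma rsum_tele F n : rsum (fun k => F (S k) - F k) n = F n - F O.
Proof. induction n; simpl; [ring|]. rewrite IHn. ring. Qed.

Lemma rsum_nonneg f n : (forall k, (k < n)%nat -> 0 <= f k) -> 0 <= rsum f n.
Proof. intros H. pose proof (rsum_le (fun _ => 0) f n H). 
  assert (Z : forall m, rsum (fun _ => 0) m = 0) by (induction m; simpl; [auto| rewrite IHm; ring]).
  rewrite Z in H0. lra. Qed.

Section Alg.
Variables C L U K : R.
Hypotheses (HC : 0 < C) (HL : 0 < L) (HLU : L <= U) (HK : 0 < K) (HKC : K <= C)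
  (HU : psi L K C = U).

Lemma alg_inv I : valid_instance L U I ->
  forall n, (n <= length I)%nat ->
    0 <= usage C L K (firstn n I) <= C /\
    (forall m, (m < n)%nat ->
       spec C L K (usage C L K (firstn m I)) (nth m I dflt_item) (decision (the_alg C L K) I m)).
Proof.
  intros HV. induction n; intros Hn.
  - simpl. unfold usage. simpl. split; [lra|]. intros; lia.
  - destruct (IHn ltac:(lia)) as [Hw Hsp].
    assert (Hvi : assumptionA_item L U (fst (nth n I dflt_item)) (snd (nth n I dflt_item))).
    { unfold valid_instance in HV. rewrite Forall_nth in HV. apply HV. exact Hn. }
    assert (Hs : spec C L K (usage C L K (firstn n I)) (nth n I dflt_item)
                   (decision (the_alg C L K) I n)).
    { rewrite decision_eq by lia. unfold choose. apply epsilon_spec.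
      apply spec_exists with U; auto. rewrite HU; lra. }
    split.
    + rewrite usage_S by lia. destruct Hs as [Hy _].
      pose proof (cap_le C (usage C L K (firstn n I)) (fst (nth n I dflt_item))). lra.
    + intros m Hm. destruct (Nat.eq_dec m n); [subst; auto|]. apply Hsp; lia.
Qed.
End Alg.

Section Alg2.
Variables C L U K : R.
Hypotheses (HC : 0 < C) (HL : 0 < L) (HLU : L <= U) (HK : 0 < K) (HKC : K <= C)
  (HU : psi L K C = U)
  (HCK : forall W, K <= W -> C * psi L K W = (C / K) * Psi L K W).

Let w I n := usage C L K (firstn n I).
Let ya I n := decision (the_alg C L K) I n.

Lemma w_rsum I : valid_instance L U I -> forall n, (n <= length I)%nat ->
  rsum (ya I) n = w I n.
Proof.
  intros HV. induction n; intros Hn; simpl.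
  - unfold w, usage. simpl. reflexivity.
  - rewrite IHn by lia. unfold w, ya. rewrite usage_S by lia. reflexivity.
Qed.

Lemma alg_feasible : online_feasible C L U (the_alg C L K).
Proof.
  intros I HV. destruct (alg_inv C L U K HC HL HLU HK HU I HV (length I) (le_n _)) as [HW Hsp].
  split.
  - intros n Hn. specialize (Hsp n Hn). destruct Hsp as [Hy _].
    pose proof (cap_le C (usage C L K (firstn n I)) (fst (nth n I dflt_item))) as [A _].
    unfold size_of. lra.
  - pose proof (w_rsum I HV (length I) (le_n _)) as E. unfold ya, w in E. eapply Rle_trans; [right; exact E| lra].
Qed.

Lemma w_mono I : valid_instance L U I -> forall k n, (n + k <= length I)%nat ->
  w I n <= w I (n + k).
Proof.
  intros HV. destruct (alg_inv C L U K HC HL HLU HK HU I HV (length I) (le_n _)) as [_ Hsp].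
  induction k; intros n Hn.
  - rewrite Nat.add_0_r. lra.
  - replace (n + S k)%nat with (S (n + k)) by lia.
    unfold w at 2. rewrite usage_S by lia.
    specialize (Hsp (n + k)%nat ltac:(lia)). destruct Hsp as [Hy _].
    specialize (IHk n ltac:(lia)). unfold w in *. lra.
Qed.

Lemma alg_competitive : competitive C L U (the_alg C L K) (C / K).
Proof.
  intros I HV ys [Hys Hsum].
  set (N := length I) in *.
  destruct (alg_inv C L U K HC HL HLU HK HU I HV N (le_n _)) as [HW Hsp].
  assert (Hvi : forall n, (n < N)%nat -> assumptionA_item L U (size_of I n) (val_of I n)).
  { intros n Hn. unfold valid_instance in HV. rewrite Forall_nth in HV. apply HV. exact Hn. }
  assert (Hsp' : forall n, (n < N)%nat -> spec C L K (w I n) (size_of I n, val_of I n) (ya I n)).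
  { intros n Hn. pose proof (Hsp n Hn) as S0. unfold size_of, val_of. revert S0. destruct (nth n I dflt_item); simpl; auto. }
  assert (HwS : forall n, (n < N)%nat -> w I (S n) = w I n + ya I n).
  { intros n Hn. unfold w, ya. apply usage_S. exact Hn. }
  assert (HwW : forall n, (n <= N)%nat -> w I n <= w I N).
  { intros n Hn. pose proof (w_mono I HV (N - n) n ltac:(unfold N in *; lia)) as M. replace (n + (N - n))%nat with N in M by lia. exact M. }
  assert (Hw0 : w I O = 0) by (unfold w, usage; reflexivity).
  set (W := w I N) in *.
  assert (HwN : forall n, (n <= N)%nat -> 0 <= w I n).
  { intros n Hn. destruct (alg_inv C L U K HC HL HLU HK HU I HV n Hn). unfold w. lra. }
  set (ALG' := rsum (fun n => val_of I n (ya I n)) N).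
  assert (HALG : ALG (the_alg C L K) I = ALG') by reflexivity.
  unfold value. rewrite HALG.
  assert (HA1 : Psi L K W <= ALG').
  { pose proof (rsum_tele (fun n => Psi L K (w I n)) N) as T. simpl in T.
    rewrite Hw0, Psi_0 in T by lra. fold W in T.
    rewrite Rminus_0_r in T. rewrite <- T. unfold ALG'. apply rsum_le. intros k Hk.
    rewrite HwS by auto. apply (item_alg C L K (w I k) (size_of I k)); auto.
    destruct (Hvi k Hk) as [_ [h _]]. exact h. }
  assert (HPsi0 : 0 <= Psi L K W).
  { assert (0 <= W) by (unfold W, w; lra). pose proof (Psi_chord L K 0 W HL HK ltac:(lra)) as [P _]. rewrite Psi_0 in P by lra.
    pose proof (psi_ge L K 0 HL HK). nra. }
  assert (HCK1 : 1 <= C / K).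
  { replace 1 with (K / K) by (field; lra). apply div_le_mono; lra. }
  destruct (Rlt_or_le W K) as [HWK|HWK].
  -
    assert (Hfull : forall n, (n < N)%nat -> ya I n = size_of I n).
    { intros n Hn. apply (item_full C L U K (w I n) (size_of I n) (val_of I n) (ya I n) W); auto.
      - apply HwN; lia.
      - rewrite <- HwS by auto. apply HwW. lia. }
    apply Rle_trans with ALG'; [|nra].
    unfold ALG'. apply rsum_le. intros k Hk. rewrite Hfull by auto.
    destruct (Hvi k Hk) as [HD [_ [_ [Hm _]]]].
    specialize (Hys k Hk). apply Hm; lra.
  -
    assert (Hmain : forall tau, 0 < tau ->
      rsum (fun n => val_of I n (ys n)) N <= ALG' - Psi L K W + psi L K (W + tau) * C).
    { intros tau Ht.
      pose proof (rsum_lin (fun n => val_of I n (ya I n))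
                    (fun n => Psi L K (w I (S n)) - Psi L K (w I n)) ys (psi L K (W + tau)) N) as E.
      pose proof (rsum_tele (fun n => Psi L K (w I n)) N) as T. simpl in T.
      rewrite Hw0, Psi_0 in T by lra. fold W in T. rewrite T in E.
      fold ALG' in E.
      assert (Hlam : 0 <= psi L K (W + tau)) by (pose proof (psi_ge L K (W + tau) HL HK); lra).
      assert (psi L K (W + tau) * rsum ys N <= psi L K (W + tau) * C)
        by (apply Rmult_le_compat_l; lra).
      assert (Hle : rsum (fun n => val_of I n (ys n)) N <= rsum (fun k => val_of I k (ya I k) - (Psi L K (w I (S k)) - Psi L K (w I k)) + psi L K (W + tau) * ys k) N).
      { apply rsum_le. intros k Hk. rewrite HwS by auto.
        apply (item_bound C L U K (w I k) (size_of I k) (val_of I k) (ya I k) W tau (ys k)); auto.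
        - apply HwN; lia.
        - rewrite <- HwS by auto. apply HwW; lia.
        - unfold W, w; lra. }
      rewrite E in Hle. lra. }
    assert (HpW : psi L K W <= U) by (rewrite <- HU; apply psi_mono; unfold W, w; lra).
    pose proof (HCK W HWK) as HCKW.
    destruct (Rle_or_lt (rsum (fun n => val_of I n (ys n)) N) (C / K * ALG')) as [ok|bad]; auto.
    exfalso.
    set (gap := rsum (fun n => val_of I n (ys n)) N - C / K * ALG') in *.
    assert (Hgap : 0 < gap) by (unfold gap; lra).
    assert (HU0 : 0 < U) by lra.
    set (tau := Rmin (K / 2) (gap * K / (4 * C * U))).
    assert (T1 : tau <= K / 2) by apply Rmin_l.
    assert (T2 : tau <= gap * K / (4 * C * U)) by apply Rmin_r.
    assert (T3 : 0 < tau).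
    { apply Rmin_glb_lt. lra. apply Rdiv_lt_0_compat. nra. 
      apply Rmult_lt_0_compat; [nra|lra]. }
    pose proof (Hmain tau T3) as M.
    pose proof (psi_cont L K W tau HL HK T3 T1) as PC.
    assert (P1 : psi L K (W + tau) * C <= C * psi L K W + C * (2 * (tau / K) * U)).
    { assert (2 * (tau / K) * psi L K W <= 2 * (tau / K) * U).
      { apply Rmult_le_compat_l; [|lra]. assert (0 < tau / K) by (apply Rdiv_lt_0_compat; lra). lra. }
      nra. }
    assert (P2 : C * (2 * (tau / K) * U) <= gap / 2).
    { replace (C * (2 * (tau / K) * U)) with (tau * (2 * C * U / K)) by (field; lra).
      apply Rle_trans with (gap * K / (4 * C * U) * (2 * C * U / K)).
      - apply Rmult_le_compat_r; [|lra]. apply Rlt_le, Rdiv_lt_0_compat; nra.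
      - right. field. repeat split; lra. }
    assert (P3 : (C / K - 1) * Psi L K W <= (C / K - 1) * ALG') by (apply Rmult_le_compat_l; lra).
    assert (Hg : gap = rsum (fun n => val_of I n (ys n)) N - C / K * ALG') by reflexivity.
    clearbody gap. lra.
Qed.
End Alg2.

Definition pr (L a : R) (m j : nat) : R := L * exp (a * INR j / INR m).
Definition lin_item (C p : R) : item := (C, fun x => p * x).
Definition Ifull C L a m : list item := map (fun j => lin_item C (pr L a m j)) (seq 0 (S m)).

Lemma lin_valid C L U p : 0 < C -> L <= p <= U -> 0 < L ->
  assumptionA_item L U C (fun x => p * x).
Proof.
  intros HC Hp HL. unfold assumptionA_item.
  split; [lra|]. split; [ring|]. split; [intros; nra|]. split; [intros; nra|].
  split; [intros; right; ring|].
  exists (fun _ => p). split.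
  - intros x Hx eps Heps. exists 1. split; [lra|].
    intros z [[Hz Hzx] _]. simpl. unfold R_dist.
    replace ((p * z - p * x) / (z - x) - p) with 0 by (field; lra).
    rewrite Rabs_R0; lra.
  - intros; lra.
Qed.

Lemma nth_Ifull C L a m j : (j < S m)%nat ->
  nth j (Ifull C L a m) dflt_item = lin_item C (pr L a m j).
Proof.
  intros Hj. unfold Ifull.
  rewrite (nth_indep (map (fun j => lin_item C (pr L a m j)) (seq 0 (S m))) (n := j) dflt_item (lin_item C (pr L a m 0))) by (rewrite length_map, length_seq; lia).
  rewrite (map_nth (fun j => lin_item C (pr L a m j)) (seq 0 (S m)) 0%nat j).
  rewrite seq_nth by lia. reflexivity.
Qed.

Lemma nth_Ik C L a m k n : (n < k)%nat -> (k <= S m)%nat ->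
  nth n (firstn k (Ifull C L a m)) dflt_item = lin_item C (pr L a m n).
Proof.
  intros H1 H2. rewrite nth_firstn. destruct (Nat.ltb_spec n k); [|lia].
  apply nth_Ifull. lia.
Qed.

Lemma length_Ik C L a m k : (k <= S m)%nat -> length (firstn k (Ifull C L a m)) = k.
Proof. intros. apply firstn_length_le. unfold Ifull. rewrite length_map, length_seq. lia. Qed.

Lemma rsum_zero f k : (forall i, (i < k)%nat -> f i = 0) -> rsum f k = 0.
Proof. induction k; intros H; simpl; auto. rewrite IHk, H by (try intros; try apply H; lia). ring. Qed.

Lemma rsum_single (v : nat -> R) j k : (j < k)%nat ->
  rsum (fun i => if Nat.eqb i j then v i else 0) k = v j.
Proof.
  induction k; intros H; [lia|]. simpl.
  destruct (Nat.eq_dec j k).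
  - subst. rewrite Nat.eqb_refl. rewrite rsum_zero. ring.
    intros i Hi. destruct (Nat.eqb_spec i k); [lia|auto].
  - rewrite IHk by lia. destruct (Nat.eqb_spec k j); [lia|]. ring.
Qed.

Section Lower.
Variables C L U : R.
Hypotheses (HC : 0 < C) (HL : 0 < L) (HLU : L <= U).
Variable alg : online_alg.
Variable c : R.
Hypotheses (Hf : online_feasible C L U alg) (Hc : competitive C L U alg c).

Let a := ln (U / L).

Lemma a_nonneg : 0 <= a.
Proof.
  unfold a. destruct (Rle_or_lt 0 (ln (U / L))) as [h|h]; auto.
  apply exp_increasing in h. rewrite exp_0, exp_ln in h by (apply Rdiv_lt_0_compat; lra).
  assert (1 <= U / L); [|lra].
  replace 1 with (L / L) by (field; lra). apply div_le_mono; lra.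
Qed.

Lemma bound_m m : (0 < m)%nat -> 1 + a - a * a / INR m <= c.
Proof.
  intros Hm.
  assert (Hm' : 0 < INR m) by (apply lt_0_INR; lia).
  set (p := pr L a m).
  set (x := a / INR m).
  set (r := exp x).
  pose proof a_nonneg as Ha.
  assert (Hx : 0 <= x) by (unfold x; apply Rmult_le_pos; [lra| left; apply Rinv_0_lt_compat; lra]).
  assert (Hr : 1 + x <= r) by apply exp_ineq1_le.
  assert (HpS : forall j, p (S j) = p j * r).
  { intros j. unfold p, pr, r, x. rewrite Rmult_assoc, <- exp_plus. f_equal. f_equal.
    rewrite S_INR. field. lra. }
  assert (Hp0 : p 0%nat = L) by (unfold p, pr; simpl; replace (a * 0 / INR m) with 0 by (field; lra); rewrite exp_0; ring).
  assert (Hpm : p m = U).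
  { unfold p, pr. replace (a * INR m / INR m) with a by (field; lra).
    unfold a. rewrite exp_ln. field; lra. apply Rdiv_lt_0_compat; lra. }
  assert (Hpb : forall j, (j <= m)%nat -> L <= p j <= U).
  { intros j Hj. unfold p, pr. split.
    - assert (0 <= a * INR j / INR m).
      { apply Rmult_le_pos; [apply Rmult_le_pos; [lra| apply pos_INR]| left; apply Rinv_0_lt_compat; lra]. }
      pose proof (exp_ge1 _ H). nra.
    - rewrite <- Hpm. unfold p, pr. apply Rmult_le_compat_l; [lra|]. apply exp_le.
      apply div_le_mono; [lra|]. apply Rmult_le_compat_l; [lra|]. apply le_INR; lia. }
  assert (Hppos : forall j, 0 < p j) by (intros; unfold p, pr; pose proof (exp_pos (a * INR j / INR m)); nra).
  set (IF := Ifull C L a m).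
  assert (Hvk : forall k, (k <= S m)%nat -> valid_instance L U (firstn k IF)).
  { intros k Hk. unfold valid_instance, IF. apply Forall_nth. intros i d Hi.
    rewrite length_Ik in Hi by auto.
    assert (E : nth i (firstn k (Ifull C L a m)) dflt_item = lin_item C (p i)) by (apply nth_Ik; lia).
    assert (E2 : nth i (firstn k (Ifull C L a m)) d = nth i (firstn k (Ifull C L a m)) dflt_item)
      by (apply nth_indep; rewrite length_Ik; auto).
    assert (HH : assumptionA_item L U (fst (lin_item C (p i))) (snd (lin_item C (p i))))
      by exact (lin_valid C L U (p i) HC (Hpb i ltac:(lia)) HL).
    rewrite <- E, <- E2 in HH. exact HH. }
  set (y := fun i => alg (firstn (S i) IF)).
  assert (HIF : firstn (S m) IF = IF).
  { apply firstn_all2. unfold IF, Ifull. rewrite length_map, length_seq. lia. }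
  destruct (Hf IF ltac:(rewrite <- HIF; apply Hvk; lia)) as [Fy FS].
  assert (HlenIF : length IF = S m) by (unfold IF, Ifull; rewrite length_map, length_seq; auto).
  rewrite HlenIF in FS, Fy.
  assert (Hy0 : forall i, (i < S m)%nat -> 0 <= y i) by (intros i Hi; apply (Fy i Hi)).
  assert (HT : rsum y (S m) <= C) by exact FS.
  set (Sk := fun k => rsum (fun i => p i * y i) k).
  assert (Hcomp : forall k, (k < S m)%nat -> p k * C <= c * Sk (S k)).
  { intros k Hk.
    set (Ik := firstn (S k) IF).
    set (ys := fun i => if Nat.eqb i k then C else 0).
    assert (Hlk : length Ik = S k) by (apply length_Ik; lia).
    assert (Hfe : offline_feasible C Ik ys).
    { split.
      - intros n Hn. rewrite Hlk in Hn. unfold size_of. unfold Ik, IF. rewrite nth_Ik by lia.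
        simpl. unfold ys. destruct (Nat.eqb n k); lra.
      - rewrite Hlk. unfold ys. rewrite (rsum_single (fun _ => C)) by lia. lra. }
    pose proof (Hc Ik (Hvk (S k) ltac:(lia)) ys Hfe) as H.
    unfold value, ALG in H. rewrite Hlk in H.
    assert (E1 : rsum (fun n => val_of Ik n (ys n)) (S k) = p k * C).
    { rewrite (rsum_ext _ (fun i => if Nat.eqb i k then p i * C else 0)).
      - apply (rsum_single (fun i => p i * C)). lia.
      - intros n Hn. unfold val_of, Ik, IF. rewrite nth_Ik by lia. simpl. unfold ys.
        destruct (Nat.eqb n k); fold p; ring. }
    assert (E2 : rsum (fun n => val_of Ik n (decision alg Ik n)) (S k) = Sk (S k)).
    { unfold Sk. apply rsum_ext. intros n Hn. unfold val_of, Ik, IF. rewrite nth_Ik by lia.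
      unfold decision, y. rewrite firstn_firstn.
      replace (Init.Nat.min (S n) (S k)) with (S n) by lia. reflexivity. }
    unfold value in H. rewrite Hlk in H. rewrite E1 in H. eapply Rle_trans; [exact H|]. right. f_equal. exact E2. }
  assert (Hcpos : 0 < c).
  { pose proof (Hcomp 0%nat ltac:(lia)) as H0. unfold Sk in H0. simpl in H0.
    pose proof (Hy0 0%nat ltac:(lia)). pose proof (Hppos 0%nat). 
    rewrite Hp0 in *. destruct (Rle_or_lt c 0) as [h|h]; auto. exfalso.
    assert (0 <= L * y 0%nat) by nra. assert (c * (L * y 0%nat) <= 0) by nra.
    assert (0 < L * C) by nra. lra. }
  set (q := 1 - 1 / r).
  assert (Hr0 : 0 < r) by (unfold r; apply exp_pos).
  assert (Hq : 0 <= q).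
  { unfold q. assert (1 / r <= 1). { apply Rmult_le_reg_r with r; [lra|]. 
      replace (1 / r * r) with 1 by (field; lra). lra. } lra. }
  (* Abel *)
  assert (Hab : forall k, (k < S m)%nat ->
     c * rsum y (S k) - c * Sk (S k) / p k >= C * INR k * q).
  { induction k; intros Hk.
    - unfold Sk. simpl. replace (c * (0 + y 0%nat) - c * (0 + p 0%nat * y 0%nat) / p 0%nat) with 0
        by (field; pose proof (Hppos 0%nat); lra). lra.
    - specialize (IHk ltac:(lia)).
      pose proof (Hcomp k ltac:(lia)) as Hk1.
      assert (ES : Sk (S (S k)) = Sk (S k) + p (S k) * y (S k)) by reflexivity.
      assert (ET : rsum y (S (S k)) = rsum y (S k) + y (S k)) by reflexivity.
      rewrite ES, ET. rewrite !HpS.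
      set (pk := p k) in *. set (T := rsum y (S k)) in *. set (s := Sk (S k)) in *.
      assert (Hpk : 0 < pk) by apply Hppos.
      replace (c * (T + y (S k)) - c * (s + pk * r * y (S k)) / (pk * r))
        with ((c * T - c * s / pk) + (c * s / pk) * q) by (unfold q; field; lra).
      assert (C <= c * s / pk).
      { apply Rmult_le_reg_r with pk; [lra|]. replace (c * s / pk * pk) with (c * s) by (field; lra). lra. }
      rewrite S_INR. nra. }
  pose proof (Hab m ltac:(lia)) as Hfin.
  pose proof (Hcomp m ltac:(lia)) as Hcm. rewrite Hpm in Hcm.
  assert (HU0 : 0 < U) by lra.
  assert (C <= c * Sk (S m) / U).
  { apply Rmult_le_reg_r with U; [lra|]. replace (c * Sk (S m) / U * U) with (c * Sk (S m)) by (field; lra). lra. }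
  rewrite Hpm in Hfin.
  assert (c * rsum y (S m) <= c * C) by (apply Rmult_le_compat_l; lra).
  assert (H1 : 1 + INR m * q <= c).
  { apply Rmult_le_reg_r with C; [lra|]. nra. }
  assert (Hq2 : x - x * x <= q).
  { unfold q. assert (x / (1 + x) <= 1 - 1 / r).
    { replace (1 - 1 / r) with ((r - 1) / r) by (field; lra).
      apply Rmult_le_reg_r with ((1 + x) * r); [nra|].
      replace (x / (1 + x) * ((1 + x) * r)) with (x * r) by (field; lra).
      replace ((r - 1) / r * ((1 + x) * r)) with ((r - 1) * (1 + x)) by (field; lra). nra. }
    assert (x - x * x <= x / (1 + x)).
    { apply Rmult_le_reg_r with (1 + x); [lra|].
      replace (x / (1 + x) * (1 + x)) with x by (field; lra). nra. }
    lra. }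
  assert (INR m * (x - x * x) = a - a * a / INR m) by (unfold x; field; lra).
  assert (INR m * (x - x * x) <= INR m * q) by (apply Rmult_le_compat_l; lra).
  lra.
Qed.

Lemma lower_bound : 1 + ln (U / L) <= c.
Proof.
  fold a. pose proof a_nonneg.
  destruct (Rle_or_lt (1 + a) c) as [h|h]; auto. exfalso.
  set (d := 1 + a - c).
  destruct (INR_unbounded (a * a / d + 1)) as [m Hm].
  assert (Hd : 0 < d) by (unfold d; lra).
  assert (Hm0 : (0 < m)%nat).
  { destruct m; [simpl in Hm|lia]. assert (0 <= a * a / d) by (apply Rmult_le_pos; [nra| left; apply Rinv_0_lt_compat; lra]). lra. }
  pose proof (bound_m m Hm0) as B.
  assert (Hm' : 0 < INR m) by (apply lt_0_INR; lia).
  assert (a * a / INR m < d).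
  { apply Rmult_lt_reg_r with (INR m); [lra|]. replace (a * a / INR m * INR m) with (a * a) by (field; lra).
    assert (a * a / d < INR m) by lra.
    apply Rmult_lt_compat_r with (r := d) in H0; [|lra].
    replace (a * a / d * d) with (a * a) in H0 by (field; lra). lra. }
  unfold d in *. lra.
Qed.
End Lower.

Theorem theorem2 (C L U : R) :
  0 < C -> 0 < L -> L <= U ->
  (exists alg : online_alg,
      online_feasible C L U alg /\ competitive C L U alg (1 + ln (U / L))) /\
  (forall (alg : online_alg) (c : R),
      online_feasible C L U alg -> competitive C L U alg c ->
      1 + ln (U / L) <= c).
Proof.
  intros HC HL HLU.
  split.
  - assert (Ha : 0 <= ln (U / L)).
    { destruct (Rle_or_lt 0 (ln (U / L))) as [h|h]; auto.
      apply exp_increasing in h. rewrite exp_0, exp_ln in h by (apply Rdiv_lt_0_compat; lra).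
      assert (1 <= U / L); [|lra].
      replace 1 with (L / L) by (field; lra). apply div_le_mono; lra. }
    set (al := 1 + ln (U / L)) in *.
    assert (Hal : 1 <= al) by (unfold al; lra).
    set (K := C / al).
    assert (HK : 0 < K) by (unfold K; apply Rdiv_lt_0_compat; lra).
    assert (HKC : K <= C).
    { unfold K. apply Rmult_le_reg_r with al; [lra|].
      replace (C / al * al) with C by (field; lra). nra. }
    assert (HCal : C / K = al) by (unfold K; field; lra).
    assert (HU : psi L K C = U).
    { rewrite psi_exp by lra. rewrite HCal. unfold al.
      replace (1 + ln (U / L) - 1) with (ln (U / L)) by ring.
      rewrite exp_ln by (apply Rdiv_lt_0_compat; lra). field; lra. }
    assert (HCK : forall W, K <= W -> C * psi L K W = (C / K) * Psi L K W).
    { intros W HW. rewrite psi_exp, Psi_exp by lra. field. lra. }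
    exists (the_alg C L K). split.
    + apply (alg_feasible C L U K HC HL HLU HK HU).
    + rewrite <- HCal. apply (alg_competitive C L U K HC HL HLU HK HKC HU HCK).
  - intros alg c Hf Hc. apply (lower_bound C L U HC HL HLU alg c Hf Hc).
Qed.
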